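(* Let $A\subset(0,1)^n$ be an open subanalytic cell which is prepared with center $0$, and let $J=\{i\in\{1,\dots,n\}: x_i \text{ is asymptotically undetermined on } A\}$. Then for any nonzero $\gamma\in\mathbb{Q}^n$ with support in $J$, the image of the function $A\to\mathbb{R}$, $x\mapsto x^\gamma=\prod_i x_i^{\gamma_i}$, is not contained in any compact subset of $(0,+\infty)$.
   Context: ''Subanalytic'' means globally subanalytic (definable in the real field expanded by all restricted analytic functions). A function on a set is analytic if it extends analytically to an open neighbourhood; an analytic unit is an analytic function of constant nonzero sign. Subanalytic terms: finite compositions of restricted analytic functions, $+$, $\times$ and the functions $t\mapsto t^r$ ($t\ge0$), $0$ ($t<0$), $r\in\mathbb{Q}$. A subanalytic cell $A\subset\mathbb{R}^n$ is a set such that for every $i$, $\Pi_i(A)$ is a subanalytic cylinder over $\Pi_{i-1}(A)$ in the variable $x_i$, i.e. $\Pi_{i-1}(A)$ is defined quantifier-freely by subanalytic terms, $=,<$, and $\Pi_i(A)$ is the graph $x_i=a(x_{<i})$, or $x_i>a$, or $x_i<a$, or $a<x_i<b$ over $\Pi_{i-1}(A)$ with $a<b$ analytic subanalytic terms (for $i=1$: a point or an open interval). The cell is open if no $\Pi_i(A)$ is a graph. For an open cell $A\subset(0,1)^n$ the zero tuple is a center, with coordinates $x$ themselves. Write, for $i=1,\dots,n$, $\Pi_i(A)=\{x_{\le i}: x_{<i}\in\Pi_{i-1}(A),\ a_i(x_{<i})<x_i<b_i(x_{<i})\}$. A strong subanalytic unit on such an open cell $A'\subset(0,1)^k$ with center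 $0$ is $U\circ\varphi$ with $\varphi(x)=(x^{\beta_1},\dots,x^{\beta_N})$ bounded on $A'$, $\beta_j\in\mathbb{Q}^k$, and $U$ an analytic unit on the closure of the image of $\varphi$. $x_i$ is asymptotically determined on $A$ if there is $C>0$ with $b_i<Ca_i$ on $\Pi_{i-1}(A)$, asymptotically undetermined otherwise. $\gamma\in\mathbb{Q}^n$ has support in $J$ if $\gamma_i=0$ for $i\notin J$. Preparedness (for open cells $A'\subset(0,1)^k$ with center $0$), defined by induction on $k$ for $J'$ a subset of the asymptotically undetermined indices: for $k=0$ everything is $\emptyset$-prepared; for $k\ge1$, $A'$ is $J'$-prepared if the family $\{a_k,b_k,b_k-a_k\}$ is $(J'\cap\{1,\dots,k-1\})$-prepared on $\Pi_{k-1}(A')$ with center $0$ and $0$ lies in the closure of the image of $a_k$; a finite family $\mathcal{F}$ of subanalytic functions on $A'$ is $J'$-prepared on $A'$ if $A'$ is $J'$-prepared and each $g\in\mathcal{F}$ is either $0$ on $A'$ or equals $x^\alpha u(x)$ with $u$ a strong subanalytic unit with center $0$ and $\alpha$ with support in $J'$. ''Prepared'' means $J'$-prepared with $J'$ the set of all asymptotically undetermined indices. *)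

(* Defs.v *)
From HB Require Import structures.
From mathcomp Require Import all_boot all_order all_algebra.
From mathcomp Require Import all_classical all_reals all_analysis.
Set Implicit Arguments. Unset Strict Implicit. Unset Printing Implicit Defensive.
Import Order.TTheory GRing.Theory Num.Theory.
Import numFieldNormedType.Exports.
Local Open Scope classical_set_scope.
Local Open Scope ring_scope.

(* Points of R^k are represented as sequences x : seq R with size x = k;
   coordinates are 0-based: x_i is [nth 0 x i], and x_{<i} is [take i x]. *)

Section Subanalytic.
Variable R : realType.

(* t |-> t^r for t >= 0 and 0 for t < 0 (r rational); 0^r = 0 for r <> 0,
   0^0 = 1 (MathComp's powR convention). *)
Definition powq (r : rat) (t : R) : R := if t < 0 then 0 else powR t (ratr r).

Definition sball (a : seq R) (e : R) : set (seq R) :=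
  [set y | size y = size a /\ forall j, (j < size a)%N -> `|nth 0 y j - nth 0 a j| < e].

Definition sopen (m : nat) (U : set (seq R)) : Prop :=
  (forall x, U x -> size x = m) /\
  (forall x, U x -> exists2 e : R, 0 < e & sball x e `<=` U).

Definition sclosure (m : nat) (S : set (seq R)) : set (seq R) :=
  [set y | size y = m /\ forall e : R, 0 < e -> exists z, S z /\ sball y e z].

Definition psum (m N : nat) (c : seq nat -> R) (a y : seq R) : R :=
  \sum_(al : m.-tuple 'I_N.+1)
     c [seq val i | i <- al] *
     \prod_(j < m) (nth 0 y j - nth 0 a j) ^+ (nth 0%N [seq val i | i <- al] j).

Definition pabs (m N : nat) (c : seq nat -> R) (a y : seq R) : R :=
  \sum_(al : m.-tuple 'I_N.+1)
     `|c [seq val i | i <- al]| *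
     \prod_(j < m) `|nth 0 y j - nth 0 a j| ^+ (nth 0%N [seq val i | i <- al] j).

Definition analytic_at (m : nat) (g : seq R -> R) (a : seq R) : Prop :=
  exists c : seq nat -> R, exists2 e : R, 0 < e & forall y, sball a e y ->
    (exists M : R, forall N, pabs m N c a y <= M) /\
    (psum m N c a y @[N --> \oo] --> g y).

Definition analytic_on (m : nat) (g : seq R -> R) (U : set (seq R)) : Prop :=
  forall a, U a -> analytic_at m g a.

Definition analytic_set (m : nat) (f : seq R -> R) (S : set (seq R)) : Prop :=
  exists U : set (seq R), exists g : seq R -> R,
    [/\ sopen m U, S `<=` U, analytic_on m g U & forall x, S x -> f x = g x].

Definition in_cube (x : seq R) : bool := all (fun t => (-1 <= t <= 1)) x.

Definition cube (m : nat) : set (seq R) := [set x | size x = m /\ in_cube x].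

Definition restricted_analytic (m : nat) (f : seq R -> R) : Prop :=
  exists g : seq R -> R, analytic_set m g (cube m) /\
    forall x, size x = m -> f x = if in_cube x then g x else 0.

Inductive saterm : (seq R -> R) -> Prop :=
| sa_var (j : nat) : saterm (fun x => nth 0 x j)
| sa_ran (m : nat) (f : seq R -> R) (g : 'I_m -> seq R -> R) :
    restricted_analytic m f -> (forall i, saterm (g i)) ->
    saterm (fun x => f (map (fun i => g i x) (enum 'I_m)))
| sa_add (g h : seq R -> R) : saterm g -> saterm h -> saterm (fun x => g x + h x)
| sa_mul (g h : seq R -> R) : saterm g -> saterm h -> saterm (fun x => g x * h x)
| sa_pow (r : rat) (g : seq R -> R) : saterm g -> saterm (fun x => powq r (g x)).

Definition monom (k : nat) (be : 'I_k -> rat) (x : seq R) : R :=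
  \prod_(i < k) powq (be i) (nth 0 x i).

(* Open cell given by the data a_i < x_i < b_i (a_i, b_i functions of x_{<i}).
   [cellset a b k] is Pi_k of the cell. *)
Definition cellset (a b : nat -> seq R -> R) (k : nat) : set (seq R) :=
  [set x | size x = k /\
     forall i, (i < k)%N -> a i (take i x) < nth 0 x i < b i (take i x)].

Definition open_cell_data (n : nat) (a b : nat -> seq R -> R) : Prop :=
  forall i, (i < n)%N ->
    [/\ saterm (a i), saterm (b i),
        analytic_set i (a i) (cellset a b i),
        analytic_set i (b i) (cellset a b i)
      & forall x, cellset a b i x -> a i x < b i x].

Definition subset_unit_cube (n : nat) (A : set (seq R)) : Prop :=
  forall x, A x -> forall j, (j < n)%N -> 0 < nth 0 x j < 1.

Definition asym_det (a b : nat -> seq R -> R) (i : nat) : Prop :=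
  exists2 C : R, 0 < C & forall x, cellset a b i x -> b i x < C * a i x.

Definition undetJ (n : nat) (a b : nat -> seq R -> R) : set nat :=
  [set i | (i < n)%N /\ ~ asym_det a b i].

Definition monomap (k N : nat) (be : 'I_N -> 'I_k -> rat) (x : seq R) : seq R :=
  map (fun j => monom (be j) x) (enum 'I_N).

Definition strong_unit (k : nat) (A : set (seq R)) (u : seq R -> R) : Prop :=
  exists N : nat, exists be : 'I_N -> 'I_k -> rat, exists U : seq R -> R,
    [/\ exists M : R, forall x, A x -> forall j, `|monom (be j) x| <= M,
        analytic_set N U (sclosure N (monomap be @` A)),
        (forall y, sclosure N (monomap be @` A) y -> 0 < U y) \/
        (forall y, sclosure N (monomap be @` A) y -> U y < 0)
      & forall x, A x -> u x = U (monomap be x)].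

Definition prepared_fn (k : nat) (J : set nat) (a b : nat -> seq R -> R)
    (g : seq R -> R) : Prop :=
  (forall x, cellset a b k x -> g x = 0) \/
  exists al : 'I_k -> rat, (forall i : 'I_k, ~ J (val i) -> al i = 0) /\
    exists u, strong_unit k (cellset a b k) u /\
      forall x, cellset a b k x -> g x = monom al x * u x.

Fixpoint prepared_cell (k : nat) (J : set nat) (a b : nat -> seq R -> R) : Prop :=
  match k with
  | 0 => True
  | k'.+1 =>
    let J' := J `&` [set i | (i < k')%N] in
    [/\ prepared_cell k' J' a b,
        prepared_fn k' J' a b (a k'),
        prepared_fn k' J' a b (b k'),
        prepared_fn k' J' a b (fun x => b k' x - a k' x)
      & forall e : R, 0 < e -> exists x, cellset a b k' x /\ `|a k' x| < e]
  end.

End Subanalytic.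

(* Main.v *)
Require Import Defs.
From HB Require Import structures.
From mathcomp Require Import all_boot all_order all_algebra.
From mathcomp Require Import all_classical all_reals all_analysis.
From mathcomp Require Import lra.
Import Order.TTheory GRing.Theory Num.Theory.
Import numFieldNormedType.Exports.
Local Open Scope classical_set_scope.
Local Open Scope ring_scope.

Lemma bnds (R : realType) (K : set R) : compact K -> K `<=` [set t : R | 0 < t] ->
  exists m M : R, 0 < m /\ forall t, K t -> m <= t <= M.
Proof.
move=> cK Kp.
have [M [_ HM]] := compact_bounded cK.
have : nbhs (0:R) (~` K).
  apply: (closed_openC (compact_closed (@Rhausdorff R) cK)) => /Kp /=; by rewrite ltxx.
move/nbhs_ballP => [e /= e0 He].
exists (e/2), (M+1); split; first by rewrite divr_gt0.
move=> t Kt; apply/andP; split.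
  rewrite leNgt; apply/negP => lt; apply: (He t) => //.
  rewrite /ball /= sub0r normrN ger0_norm; last exact/ltW/Kp.
  by apply: lt_trans lt _; rewrite ltr_pdivrMr // ltr_pMr // ltr1n.
have := HM (M+1) _ t Kt. rewrite /= => h.
apply: le_trans (ler_norm t) _; apply: h.
by rewrite ltrDl ltr01.
Qed.

Lemma cell_rcons (R : realType) (a b : nat -> seq R -> R) m x t :
  cellset a b m x -> a m x < t < b m x -> cellset a b m.+1 (rcons x t).
Proof.
move=> [sx H] ht; split; first by rewrite size_rcons sx.
move=> i; rewrite ltnS leq_eqVlt => /orP[/eqP->|lti].
  by rewrite nth_rcons sx ltnn eqxx -cats1 take_size_cat.
rewrite nth_rcons sx lti -cats1 takel_cat ?sx ?(ltnW lti) //; exact: H.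
Qed.

Lemma cell_ext (R : realType) (n : nat) (a b : nat -> seq R -> R) k :
  open_cell_data n a b -> forall d x, cellset a b k x -> (k + d <= n)%N ->
  exists y, cellset a b (k + d) y /\ take k y = x.
Proof.
move=> oc; elim=> [|d IH] x cx hd.
  exists x; rewrite addn0; split => //; apply: take_oversize; by case: cx => -> _.
have lt : (k + d < n)%N by rewrite -addnS.
have [y [cy ty]] := IH x cx (ltnW lt).
have [_ _ _ _ hab] := oc _ lt.
have hy := hab y cy.
exists (rcons y ((a (k+d) y + b (k+d) y)/2)); split.
  rewrite addnS; apply: cell_rcons => //; apply/andP; split; lra.
rewrite -cats1 takel_cat //; case: cy => -> _; exact: leq_addr.
Qed.

Arguments bnds {R K}.
Arguments cell_rcons {R a b m x t}.
Arguments cell_ext {R n a b k}.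

Theorem lemma3p5 (R : realType) (n : nat) (a b : nat -> seq R -> R)
    (gam : 'I_n -> rat) :
  open_cell_data n a b ->
  subset_unit_cube n (cellset a b n) ->
  prepared_cell n (undetJ n a b) a b ->
  (exists i : 'I_n, gam i != 0) ->
  (forall i : 'I_n, ~ undetJ n a b (val i) -> gam i = 0) ->
  ~ (exists K : set R,
       [/\ compact K, K `<=` [set t : R | 0 < t] &
           monom gam @` cellset a b n `<=` K]).
Proof.
move=> oc cu _ [i0 gi0] supp [K [cK Kp sub]].
have [m [M [m0 hK]]] := bnds cK Kp.
case: (@arg_maxnP _ i0 (fun i => gam i != 0) (fun i => val i) gi0) => k gk kmax.
have gz : forall j : 'I_n, (k < j)%N -> gam j = 0.
  move=> j lt; apply/eqP; apply: contraTT lt => /kmax; by rewrite -leqNgt.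
have uk : undetJ n a b k.
  apply: contrapT => H; move/eqP: gk; apply; exact: supp.
case: uk => kn nad.
set r : R := ratr (gam k).
have r0 : r != 0 by rewrite fmorph_eq0.
set z : R := `|M| / m + 1.
have zm : z * m = `|M| + m by rewrite mulrDl mul1r divfK // gt_eqF.
have mM : M <= `|M| by exact: ler_norm.
have z1 : 1 <= z by rewrite lerDr divr_ge0 // ltW.
set D : R := z `^ (`|r|^-1).
have D1 : 1 <= D.
  have -> : (1:R) = 1 `^ (`|r|^-1) by rewrite powR1.
  rewrite /D.
  apply: ge0_ler_powR => //; rewrite ?invr_ge0 ?nnegrE //; lra.
have D0 : 0 < D by lra.
have [x [cx hx]] : exists x, cellset a b k x /\ 4 * D * a k x <= b k x.
  apply: contrapT => H; apply: nad; exists (4 * D); first lra.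
  move=> y cy; rewrite ltNge; apply/negP => le; apply: H; exists y; split => //.
have sx : size x = k by case: cx.
have fib : forall t, a k x < t < b k x ->
    exists y, cellset a b n y /\ take k.+1 y = rcons x t.
  move=> t ht; have cxt := cell_rcons cx ht.
  have := cell_ext oc (n - k.+1) _ cxt; rewrite subnKC //.
  case/(_ _)=> // y [cy ty]; by exists y.
have nthk : forall t y, take k.+1 y = rcons x t -> nth 0 y k = t.
  move=> t y ty; by rewrite -(nth_take 0 (ltnSn k)) ty nth_rcons sx ltnn eqxx.
have pos : forall t, a k x < t < b k x -> 0 < t < 1.
  move=> t ht; have [y [cy ty]] := fib t ht.
  by rewrite -(nthk t y ty); apply: cu.
have hab : a k x < b k x by have [_ _ _ _ h] := oc k kn; exact: h.
have b0 : 0 < b k x.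
  have : a k x < (a k x + b k x) / 2 < b k x by apply/andP; split; lra.
  move/pos; lra.
set Pr := \prod_(i < n | i != k)
   (if (val i < k)%N then powq (gam i) (nth 0 x i) else 1).
have mon : forall t y, a k x < t < b k x -> cellset a b n y ->
    take k.+1 y = rcons x t -> monom gam y = t `^ r * Pr.
  move=> t y ht cy ty; rewrite /monom (bigD1 k) //=; congr (_ * _).
    have := pos t ht; rewrite (nthk t y ty) /powq => /andP[t0 _].
    by rewrite ltNge (ltW t0).
  apply: eq_bigr => i ik; case: ltnP => [ilt|ige].
    by rewrite -(nth_take 0 (ltn_trans ilt (ltnSn k))) ty nth_rcons sx ilt.
  have ki : (k < i)%N by rewrite ltn_neqAle ige andbT eq_sym.
  rewrite gz // /powq rmorph0 powRr0.
  have /andP[yi _] := cu y cy i (ltn_ord i).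
  by rewrite ltNge (ltW yi).
set t2 := b k x / 2.
set t1 := t2 / D.
have t12 : t2 = D * t1 by rewrite /t1 mulrC divfK // gt_eqF.
have t1le : t1 <= t2 by rewrite /t1 ler_pdivrMr // ler_peMr // /t2; lra.
have t1a : 2 * a k x <= t1.
  rewrite /t1 /t2 ler_pdivlMr //; nra.
have t1p : 0 < t1 by rewrite /t1 /t2 !divr_gt0.

have ht2 : t2 = b k x / 2 by [].
have h1 : a k x < t1 < b k x by apply/andP; split; lra.
have h2 : a k x < t2 < b k x by apply/andP; split; lra.
have [y1 [cy1 ty1]] := fib t1 h1.
have [y2 [cy2 ty2]] := fib t2 h2.
have /andP[v1m v1M] := hK _ (sub _ (ex_intro2 _ _ y1 cy1 erefl)).
have /andP[v2m v2M] := hK _ (sub _ (ex_intro2 _ _ y2 cy2 erefl)).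
rewrite (mon _ _ h1 cy1 ty1) in v1m v1M.
rewrite (mon _ _ h2 cy2 ty2) t12 powRM ?(ltW D0) ?(ltW t1p) // in v2m v2M.
have hDr : D `^ r = if 0 < r then z else z^-1.
  rewrite /D -powRrM; case: ltrP => rs.
    by rewrite gtr0_norm // mulVf // powRr1 // ?ltW //; lra.
  rewrite ler0_norm // invrN mulNr mulVf // powRN powRr1 //; lra.
move: v2m v2M; rewrite hDr; case: ifP => _ v2m v2M.
  have : z * m <= M.
    apply: le_trans v2M; rewrite -mulrA ler_pM2l //; lra.
  lra.
have : z * m <= M.
  apply: le_trans v1M.
  have -> : t1 `^ r * Pr = z * (z^-1 * t1 `^ r * Pr) by rewrite !mulrA mulfV ?mul1r //; apply/eqP; lra.
  rewrite ler_pM2l //; lra.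
lra.
Qed.
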